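(* Let $n\ge1$ and $p$ a prime. The quotient $\Sigma(n,p)/\mathcal{R}(n,p)$ of the $p$-modular descent algebra by its radical is commutative.
   Context: A composition of $n$ is a sequence of positive integers with sum $n$. The descent algebra $\Sigma_n$ has basis $\{B_q\}$ indexed by compositions of $n$ with multiplication $B_qB_r=\sum_{Z\in S(q,r)}B_{c(Z)}$, where for $q=[a_1,\dots,a_s]$, $r=[b_1,\dots,b_t]$, $S(q,r)$ is the set of $s\times t$ non-negative integer matrices with row sums $a_i$ and column sums $b_j$, and $c(Z)$ is the composition obtained by reading the entries of $Z$ row by row and omitting zeros. Let $\mathcal{Z}_n$ be the subring of integral combinations of the $B_q$ and $\Sigma(n,p)=\mathcal{Z}_n/p\mathcal{Z}_n$ (the $p$-modular descent algebra), an $\mathbb{F}_p$-algebra with basis $\overline{B}_q$ (images of the $B_q$). $\mathcal{R}(n,p)$ denotes the (Jacobson) radical of $\Sigma(n,p)$. *)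

(* Defs.v *)
From HB Require Import structures.
From mathcomp Require Import all_boot all_order all_algebra.
Set Implicit Arguments. Unset Strict Implicit. Unset Printing Implicit Defensive.
Import GRing.Theory.
Local Open Scope ring_scope.

Definition is_comp (n : nat) (s : seq nat) : bool :=
  all (fun a => (0 < a)%N) s && (sumn s == n).

(* A finite list of candidates containing every composition of n:
   all sequences of length <= n with entries <= n. *)
Definition comp_cands (n : nat) : seq (seq nat) :=
  flatten [seq [seq map (@nat_of_ord n.+1) (tval t) | t <- enum {: k.-tuple 'I_n.+1}]
          | k <- iota 0 n.+1].

Definition comps (n : nat) : seq (seq nat) := [seq s <- comp_cands n | is_comp n s].

Definition Comp (n : nat) := seq_sub (comps n).

(* Non-negative integer s x t matrices; entries of matrices in S(q,r) are
   bounded by n, so entries in 'I_n.+1 lose nothing. *)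
Definition in_S (n : nat) (q r : seq nat) (Z : 'M['I_n.+1]_(size q, size r)) : bool :=
  [forall i : 'I_(size q), (\sum_(j < size r) (Z i j : nat))%N == nth 0%N q i] &&
  [forall j : 'I_(size r), (\sum_(i < size q) (Z i j : nat))%N == nth 0%N r j].

Definition cZ (n : nat) (q r : seq nat) (Z : 'M['I_n.+1]_(size q, size r)) : seq nat :=
  [seq x <- flatten [seq [seq (Z i j : nat) | j <- enum 'I_(size r)]
                    | i <- enum 'I_(size q)] | x != 0%N].

Definition coef (n : nat) (q r s : seq nat) : nat :=
  #|[set Z : 'M['I_n.+1]_(size q, size r) | in_S Z && (cZ Z == s)]|.

(* Elements: F_p-linear combinations of the basis Bbar_q, q a composition. *)
Definition Sig (n p : nat) := {ffun Comp n -> 'F_p}.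

Definition Bbar (n p : nat) (q : Comp n) : Sig n p := [ffun s => (s == q)%:R].

Definition sig0 (n p : nat) : Sig n p := [ffun _ => 0].
Definition sig_add (n p : nat) (x y : Sig n p) : Sig n p := [ffun s => x s + y s].
Definition sig_opp (n p : nat) (x : Sig n p) : Sig n p := [ffun s => - x s].
Definition sig_sub (n p : nat) (x y : Sig n p) : Sig n p := [ffun s => x s - y s].

(* Bbar_q Bbar_r = sum_{Z in S(q,r)} Bbar_{c(Z)}, extended bilinearly. *)
Definition sig_mul (n p : nat) (x y : Sig n p) : Sig n p :=
  [ffun s : Comp n => \sum_(q : Comp n) \sum_(r : Comp n)
      x q * y r * (coef n (val q) (val r) (val s))%:R].

Definition left_ideal (n p : nat) (I : {set Sig n p}) : Prop :=
  [/\ sig0 n p \in I,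
      (forall x y, x \in I -> y \in I -> sig_add x y \in I),
      (forall x, x \in I -> sig_opp x \in I) &
      (forall a x, x \in I -> sig_mul a x \in I)].

Definition maximal_left_ideal (n p : nat) (I : {set Sig n p}) : Prop :=
  [/\ left_ideal I, I != [set: Sig n p] &
      forall J : {set Sig n p}, left_ideal J -> I \subset J ->
        J = I \/ J = [set: Sig n p]].

Definition in_radical (n p : nat) (x : Sig n p) : Prop :=
  forall I : {set Sig n p}, maximal_left_ideal I -> x \in I.

(* Main.v *)
Require Import Defs.
From mathcomp Require Import all_boot all_order all_algebra all_fingroup.
Set Implicit Arguments. Unset Strict Implicit. Unset Printing Implicit Defensive.
Import GRing.Theory.


Lemma size_le_sumn (s : seq nat) : all (fun a => (0 < a)%N) s -> (size s <= sumn s)%N.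
Proof.
elim: s => //= a s IH /andP[a0 /IH h]. by rewrite -add1n leq_add.
Qed.

Lemma elem_le_sumn (s : seq nat) x : x \in s -> (x <= sumn s)%N.
Proof.
elim: s => //= a s IH; rewrite inE => /orP[/eqP->|/IH h]; first exact: leq_addr.
exact: leq_trans h (leq_addl _ _).
Qed.

Lemma comp_cands_mem n s : is_comp n s -> s \in comp_cands n.
Proof.
case/andP=> hpos /eqP hsum.
apply/flatten_mapP; exists (size (map (@inord n) s)).
  by rewrite mem_iota add0n size_map ltnS -hsum size_le_sumn.
apply/mapP; exists (in_tuple (map (@inord n) s)); first by rewrite mem_enum.
rewrite /= -map_comp map_id_in // => x xs /=; rewrite inordK // ltnS -hsum.
exact: elem_le_sumn.
Qed.

Lemma mem_comps n s : (s \in comps n) = is_comp n s.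
Proof.
rewrite mem_filter; case h: (is_comp n s) => //=; exact: comp_cands_mem.
Qed.

Lemma is_comp_perm n s t : perm_eq s t -> is_comp n s = is_comp n t.
Proof.
move=> h; rewrite /is_comp (perm_sumn h).
by rewrite !all_count (seq.permP h) (seq.perm_size h).
Qed.

Lemma comps_perm n s t : perm_eq s t -> (s \in comps n) = (t \in comps n).
Proof. by move=> h; rewrite !mem_comps (is_comp_perm n h). Qed.

Lemma comp_pos n (q : Comp n) i : (i < size (val q))%N -> (0 < nth 0%N (val q) i)%N.
Proof.
move=> hi; have := ssvalP q; rewrite mem_comps => /andP[/allP h _].
by apply: h; rewrite mem_nth.
Qed.

Lemma comp_size n (q : Comp n) : (size (val q) <= n)%N.
Proof.
have := ssvalP q; rewrite mem_comps => /andP[h /eqP e].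
by apply: leq_trans (size_le_sumn h) _; rewrite (eqP (_ : sumn _ == n)) ?e.
Qed.

Section Mx.
Variable N : nat.

Definition rows a b (F : 'I_a -> 'I_b -> nat) : seq nat :=
  flatten [seq [seq F i j | j <- enum 'I_b] | i <- enum 'I_a].

Definition cz a b (Z : 'M['I_N]_(a,b)) : seq nat :=
  [seq x <- rows (fun i j => (Z i j : nat)) | x != 0%N].

Definition inS a b (R C : nat -> nat) (Z : 'M['I_N]_(a,b)) : bool :=
  [forall i : 'I_a, (\sum_(j < b) (Z i j : nat))%N == R i] &&
  [forall j : 'I_b, (\sum_(i < a) (Z i j : nat))%N == C j].

Lemma count_rows a b (F : 'I_a -> 'I_b -> nat) (P : pred nat) :
  count P (rows F) = (\sum_i \sum_j P (F i j))%N.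
Proof.
rewrite /rows count_flatten -map_comp sumnE big_map enumT.
by apply: eq_bigr => i _ /=; rewrite count_map -sum1_count enumT big_mkcond.
Qed.

Lemma perm_rows_tr a b (F : 'I_a -> 'I_b -> nat) :
  perm_eq (rows F) (rows (fun j i => F i j)).
Proof.
apply/seq.permP => P; rewrite !count_rows; exact: exchange_big.
Qed.

Lemma perm_rows_col a b (F : 'I_a -> 'I_b -> nat) (s : 'S_b) :
  perm_eq (rows (fun i j => F i (s j))) (rows F).
Proof.
apply/seq.permP => P; rewrite !count_rows; apply: eq_bigr => i _.
by rewrite [RHS](reindex_inj (@perm_inj _ s)).
Qed.

Lemma sum_tr (V : nmodType) a b (R C : nat -> nat) (G : seq nat -> V) :
  (forall s t, perm_eq s t -> G s = G t) ->
  (\sum_(Z : 'M['I_N]_(a,b) | inS R C Z) G (cz Z) =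
  \sum_(Z : 'M['I_N]_(b,a) | inS C R Z) G (cz Z))%R.
Proof.
move=> HG; rewrite [RHS](reindex (@trmx 'I_N a b)) /=; last first.
  by exists (@trmx 'I_N b a) => M _; rewrite trmxK.
apply: eq_big => Z.
  rewrite /inS andbC; congr andb; apply: eq_forallb => i;
  by congr (_ == _); apply: eq_bigr => j _; rewrite mxE.
move=> _; apply: HG; rewrite /cz; apply: perm_filter.
rewrite perm_sym; apply: perm_trans (perm_rows_tr _) _.
by apply/seq.permP => P; rewrite !count_rows; apply: eq_bigr => i _;
   apply: eq_bigr => j _; rewrite mxE.
Qed.

Definition colp a b (s : 'S_b) (Z : 'M['I_N]_(a,b)) : 'M['I_N]_(a,b) :=
  \matrix_(i, j) Z i (s j).

Lemma colp_inj a b (s : 'S_b) : injective (@colp a b s).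
Proof.
move=> Z Z' e; apply/matrixP => i j.
have := congr1 (fun M : 'M['I_N]_(a,b) => M i (s^-1 j)%g) e; rewrite /colp !mxE.
by rewrite permKV.
Qed.

Lemma sum_col (V : nmodType) a b (R C C' : nat -> nat) (s : 'S_b)
    (G : seq nat -> V) :
  (forall s t, perm_eq s t -> G s = G t) ->
  (forall j : 'I_b, C' j = C (s j)) ->
  (\sum_(Z : 'M['I_N]_(a,b) | inS R C Z) G (cz Z) =
  \sum_(Z : 'M['I_N]_(a,b) | inS R C' Z) G (cz Z))%R.
Proof.
move=> HG HC; rewrite [RHS](reindex_inj (@colp_inj a b s)) /=.
apply: eq_big => Z.
  rewrite /inS; congr andb.
    apply: eq_forallb => i; congr (_ == _).
    rewrite (reindex_inj (@perm_inj _ s)); apply: eq_bigr => j _.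
    by rewrite /colp mxE.
  have E j : (\sum_(i < a) (colp s Z i j : nat))%N = (\sum_(i < a) (Z i (s j) : nat))%N.
    by apply: eq_bigr => i _; rewrite /colp mxE.
  apply/forallP/forallP => h j.
    by rewrite E HC.
  by have := h (s^-1 j)%g; rewrite E HC permKV.
move=> _; apply: HG; rewrite /cz; apply: perm_filter.
rewrite perm_sym; apply: perm_trans (perm_rows_col _ s).
by apply/seq.permP => P; rewrite !count_rows; apply: eq_bigr => i _;
   apply: eq_bigr => j _; rewrite mxE.
Qed.

End Mx.

Lemma in_SE n (q r : seq nat) (Z : 'M['I_n.+1]_(size q, size r)) :
  in_S Z = inS (nth 0%N q) (nth 0%N r) Z.
Proof. by []. Qed.

Lemma cZE n (q r : seq nat) (Z : 'M['I_n.+1]_(size q, size r)) :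
  cZ Z = cz Z.
Proof. by []. Qed.

Lemma sum_col_cast (V : nmodType) N a b b' (E : b = b') (R C C' : nat -> nat)
   (s : 'S_b) (G : seq nat -> V) :
  (forall s t, perm_eq s t -> G s = G t) ->
  (forall j : 'I_b, C' j = C (s j)) ->
  (\sum_(Z : 'M['I_N]_(a,b) | inS R C Z) G (cz Z) =
  \sum_(Z : 'M['I_N]_(a,b') | inS R C' Z) G (cz Z))%R.
Proof. by subst b'; exact: sum_col. Qed.

Lemma sum_col_seq (V : nmodType) n (q r r' : seq nat) (G : seq nat -> V) :
  (forall s t, perm_eq s t -> G s = G t) -> perm_eq r r' ->
  (\sum_(Z : 'M['I_n.+1]_(size q, size r) | in_S Z) G (cZ Z) =
   \sum_(Z : 'M['I_n.+1]_(size q, size r') | in_S Z) G (cZ Z))%R.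
Proof.
move=> HG hp.
have hp' : perm_eq r' (in_tuple r) by rewrite perm_sym.
have [s e] := tuple_permP hp'.
have HC (j : 'I_(size r)) : nth 0%N r' j = nth 0%N r (s j).
  by rewrite e nth_mktuple (tnth_nth 0%N).
exact (@sum_col_cast V n.+1 (size q) _ _ (seq.perm_size hp) (nth 0%N q) _ _ s G HG HC).
Qed.

Lemma sum_tr_seq (V : nmodType) n (q r : seq nat) (G : seq nat -> V) :
  (forall s t, perm_eq s t -> G s = G t) ->
  (\sum_(Z : 'M['I_n.+1]_(size q, size r) | in_S Z) G (cZ Z) =
   \sum_(Z : 'M['I_n.+1]_(size r, size q) | in_S Z) G (cZ Z))%R.
Proof. move=> HG; exact (@sum_tr n.+1 V (size q) (size r) (nth 0%N q) (nth 0%N r) G HG). Qed.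

Lemma coefS_sum n q r s :
  coef n q r s = (\sum_(Z : 'M['I_n.+1]_(size q, size r) | in_S Z) (cZ Z == s))%N.
Proof.
rewrite /coef cardsE -sum1_card big_mkcond /= [RHS]big_mkcond /=.
apply: eq_bigr => Z _; rewrite unfold_in; by case: (in_S Z); case: (cZ Z == s).
Qed.

Lemma sumn_filter0 (s : seq nat) : sumn [seq x <- s | x != 0%N] = sumn s.
Proof. by elim: s => //= a s IH; case: eqP => [->|_] /=; rewrite IH. Qed.

Lemma sumn_mapE I (r : seq I) (f : I -> nat) : sumn [seq f i | i <- r] = (\sum_(i <- r) f i)%N.
Proof. by rewrite sumnE big_map. Qed.

Section Rows.
Variables (N a b : nat) (R C : nat -> nat) (Z : 'M['I_N]_(a,b)).
Hypothesis hZ : inS R C Z.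
Hypothesis hR : forall i : 'I_a, (0 < R i)%N.

Let fr (i : 'I_a) := [seq x <- [seq (Z i j : nat) | j <- enum 'I_b] | x != 0%N].

Lemma cz_fr : cz Z = flatten [seq fr i | i <- enum 'I_a].
Proof. by rewrite /cz /rows filter_flatten -map_comp. Qed.

Lemma sumn_fr i : sumn (fr i) = R i.
Proof.
rewrite /fr sumn_filter0 sumn_mapE enumT.
by case/andP: hZ => /forallP /(_ i) /eqP <- _.
Qed.

Lemma size_fr i : (0 < size (fr i))%N.
Proof. have := hR i; rewrite -sumn_fr; by case: (fr i). Qed.

Lemma size_cz : size (cz Z) = (\sum_i size (fr i))%N.
Proof. by rewrite cz_fr size_flatten /shape -map_comp sumn_mapE enumT. Qed.

Lemma cz_size_ge : (a <= size (cz Z))%N.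
Proof.
rewrite size_cz.
have := @leq_sum 'I_a (index_enum _) predT (fun _ => 1%N) (fun i => size (fr i)) (fun i _ => size_fr i).
by rewrite sum1_card card_ord.
Qed.

Lemma cz_size_eq : size (cz Z) = a -> cz Z = [seq R (nat_of_ord i) | i <- enum 'I_a].
Proof.
move=> e.
have h0 : (\sum_i (size (fr i) - 1) == 0)%N.
  have := e; rewrite size_cz => e'.
  have : (\sum_i (size (fr i) - 1) + \sum_(i < a) 1 = \sum_i size (fr i))%N.
    by rewrite -big_split /=; apply: eq_bigr => i _; rewrite subnK // size_fr.
  rewrite e' sum1_card card_ord => h.
  by rewrite -(eqn_add2r a) h add0n.
have h1 i : fr i = [:: R i].
  move: h0; rewrite sum_nat_eq0 => /forallP /(_ i) /=; rewrite subn_eq0 => hs.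
  have := size_fr i; have := sumn_fr i.
  by case: (fr i) hs => [|x [|y t]] //= _ <- _; rewrite addn0.
rewrite cz_fr (eq_map h1).
by rewrite -(flatten_seq1 [seq R (nat_of_ord i) | i <- enum 'I_a]) -map_comp.
Qed.

End Rows.

Lemma map_nth_enum (q : seq nat) : [seq nth 0%N q (nat_of_ord i) | i <- enum 'I_(size q)] = q.
Proof.
have -> : [seq nth 0%N q (nat_of_ord i) | i <- enum 'I_(size q)] = [seq nth 0%N q i | i <- [seq val i | i <- enum 'I_(size q)]].
  by rewrite -map_comp.
by rewrite val_enum_ord -/(mkseq _ _) mkseq_nth.
Qed.

Lemma size_cz_le N a b (Z : 'M['I_N]_(a,b)) : (size (cz Z) <= a * b)%N.
Proof.
rewrite /cz size_filter; apply: leq_trans (count_size _ _) _.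
rewrite -count_predT count_rows.
rewrite (eq_bigr (fun _ => b)); first by rewrite sum_nat_const card_ord.
by move=> i _; rewrite sum1_card card_ord.
Qed.

Section CompLemmas.
Variable n : nat.

Lemma comp_sum (q : Comp n) : sumn (val q) = n.
Proof. by have := ssvalP q; rewrite mem_comps => /andP[_ /eqP]. Qed.

Lemma inS_pos (q : Comp n) (r : seq nat) (Z : 'M['I_n.+1]_(size (val q), size r)) :
  forall i : 'I_(size (val q)), (0 < nth 0%N (val q) i)%N.
Proof. by move=> i; apply: comp_pos. Qed.

Lemma coef_size (q : Comp n) r s :
  coef n (val q) r s != 0%N -> (size (val q) <= size s)%N.
Proof.
rewrite coefS_sum sum_nat_eq0 => /forallPn [Z].
case hZ: (in_S Z) => //=; case: (cZ Z =P s) => [<- _|//].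
exact: (cz_size_ge hZ (inS_pos Z)).
Qed.

Lemma coef_eq (q : Comp n) r s :
  size s = size (val q) -> s != val q -> coef n (val q) r s = 0%N.
Proof.
move=> hs hne; rewrite coefS_sum big1 // => Z hZ.
apply/eqP; rewrite eqb0; apply/eqP => e.
have e2 : size (cz Z) = size (val q) by rewrite -cZE e.
move: (cz_size_eq hZ (inS_pos Z) e2); rewrite map_nth_enum -cZE e => e3.
by rewrite e3 eqxx in hne.
Qed.

Lemma coef_diag (q : Comp n) r :
  coef n (val q) r (val q) =
  (\sum_(Z : 'M['I_n.+1]_(size (val q), size r) | in_S Z) perm_eq (cZ Z) (val q))%N.
Proof.
rewrite coefS_sum; apply: eq_bigr => Z hZ; congr nat_of_bool.
apply/eqP/idP => [->|hp]; first exact: perm_refl.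
have e2 : size (cz Z) = size (val q) by rewrite -cZE (seq.perm_size hp).
by move: (cz_size_eq hZ (inS_pos Z) e2); rewrite map_nth_enum.
Qed.

Lemma coef_id (q : Comp n) s :
  coef n (val q) [:: n] s = (s == val q).
Proof.
rewrite coefS_sum.
pose Z0 : 'M['I_n.+1]_(size (val q), size [:: n]) :=
  (\matrix_(i, j) inord (nth 0%N (val q) i))%R.
have hle i : (nth 0%N (val q) i <= n)%N.
  case: (ltnP i (size (val q))) => hi; last by rewrite nth_default.
  apply: leq_trans (elem_le_sumn (mem_nth 0%N hi)) _.
  by rewrite comp_sum.
have hsum : (\sum_(i < size (val q)) nth 0%N (val q) i)%N = n.
  have := sumn_mapE (enum 'I_(size (val q))) (fun i => nth 0%N (val q) i).
  rewrite map_nth_enum enumT => h; rewrite -h; exact: comp_sum.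
have hZ0 : in_S Z0.
  apply/andP; split; apply/forallP => i.
    by rewrite big_ord1 /Z0 mxE inordK ?ltnS.
  rewrite (ord1 i) /=; apply/eqP; rewrite -[RHS]hsum; apply: eq_bigr => j _.
  by rewrite /Z0 mxE inordK ?ltnS.
have uniq0 Z : in_S Z -> Z = Z0.
  case/andP=> /forallP h _; apply/matrixP => i j.
  rewrite (ord1 j) /Z0 mxE; apply: val_inj; rewrite /= inordK ?ltnS //.
  by have := h i; rewrite big_ord1 => /eqP.
rewrite (bigD1 Z0) //= big1 ?addn0; last first.
  by move=> Z /andP[hZ hne]; rewrite (uniq0 Z hZ) eqxx in hne.
have -> : cZ Z0 = val q.
  have hs : size (cz Z0) = size (val q).
    apply/eqP; rewrite eqn_leq (cz_size_ge hZ0 (inS_pos Z0)) andbT.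
    by have := size_cz_le Z0; rewrite muln1.
  by move: (cz_size_eq hZ0 (inS_pos Z0) hs); rewrite map_nth_enum.
by rewrite eq_sym.
Qed.

End CompLemmas.
Local Open Scope ring_scope.

Section Alg.
Variables n p : nat.
Notation F := 'F_p.
Notation S := (Sig n p).

Definition cf (q r s : Comp n) : F := (coef n (val q) (val r) (val s))%:R.

Lemma sig_mulE (x y : S) s :
  sig_mul x y s = \sum_q \sum_r x q * y r * cf q r s.
Proof. by rewrite ffunE. Qed.

Definition cinv (G : Comp n -> F) :=
  forall s t : Comp n, perm_eq (val s) (val t) -> G s = G t.

Definition inD (y : S) : bool :=
  [forall G : {ffun Comp n -> F},
    [forall s, forall t, perm_eq (val s) (val t) ==> (G s == G t)] ==>
    (\sum_r y r * G r == 0)].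

Lemma inDP (y : S) :
  reflect (forall G, cinv G -> \sum_r y r * G r = 0) (inD y).
Proof.
apply: (iffP forallP) => [h G hG | h G].
  have hc : [forall s, forall t, perm_eq (val s) (val t) ==> ([ffun r => G r] s == [ffun r => G r] t)].
    by apply/forallP => s; apply/forallP => t; apply/implyP => st;
       rewrite !ffunE (hG s t st).
  move: (h [ffun r => G r]); rewrite hc implyTb => /eqP e; rewrite -[RHS]e.
  by apply: eq_bigr => r _; rewrite ffunE.
rewrite /=; apply/implyP => /forallP hG; apply/eqP/h => s t st.
by have /forallP/(_ t)/implyP/(_ st)/eqP := hG s.
Qed.

Definition Ghat (G : Comp n -> F) (c : seq nat) : F :=
  \sum_(s : Comp n) (c == val s)%:R * G s.

Lemma Ghat_in G (s0 : Comp n) : Ghat G (val s0) = G s0.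
Proof.
rewrite /Ghat (bigD1 s0) //= eqxx mul1r big1 ?addr0 // => s hs.
by rewrite (inj_eq val_inj) eq_sym (negbTE hs) mul0r.
Qed.

Lemma Ghat_out G c : c \notin comps n -> Ghat G c = 0.
Proof.
move=> hc; rewrite /Ghat big1 // => s _.
case: eqP => [e|]; last by rewrite mul0r.
by move: hc; rewrite e (ssvalP s).
Qed.

Lemma Ghat_perm G c c' : cinv G -> perm_eq c c' -> Ghat G c = Ghat G c'.
Proof.
move=> hG hp; case hc: (c \in comps n).
  have hc' : c' \in comps n by rewrite -(comps_perm n hp).
  have -> : c = val (SeqSub hc) by [].
  have -> : c' = val (SeqSub hc') by [].
  by rewrite !Ghat_in; apply: hG.
have hc' : c' \notin comps n by rewrite -(comps_perm n hp) hc.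
by rewrite !Ghat_out // hc.
Qed.

Definition H (G : Comp n -> F) q r := \sum_s cf q r s * G s.

Lemma H_sum G (q r : Comp n) :
  H G q r = \sum_(Z : 'M['I_n.+1]_(size (val q), size (val r)) | in_S Z) Ghat G (cZ Z).
Proof.
rewrite /H.
under eq_bigr do rewrite /cf coefS_sum natr_sum mulr_suml.
rewrite exchange_big /=; apply: eq_bigr => Z _.
by apply: eq_bigr => s _.
Qed.

Lemma H_tr G q r : cinv G -> H G q r = H G r q.
Proof.
move=> hG; rewrite !H_sum.
exact: (@sum_tr_seq F n (val q) (val r) (Ghat G) (fun c c' => Ghat_perm hG)).
Qed.

Lemma H_col G q r r' : cinv G -> perm_eq (val r) (val r') -> H G q r = H G q r'.
Proof.
move=> hG hp; rewrite !H_sum.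
exact: (@sum_col_seq F n (val q) (val r) (val r') (Ghat G) (fun c c' => Ghat_perm hG) hp).
Qed.

Lemma mulG (x y : S) G :
  \sum_s sig_mul x y s * G s = \sum_q \sum_r x q * y r * H G q r.
Proof.
under eq_bigr do rewrite sig_mulE mulr_suml.
rewrite exchange_big; apply: eq_bigr => q _.
under eq_bigr do rewrite mulr_suml.
rewrite exchange_big; apply: eq_bigr => r _.
by rewrite /H mulr_sumr; apply: eq_bigr => s _; rewrite mulrA.
Qed.

Lemma inD_comm (x y : S) : inD (sig_sub (sig_mul x y) (sig_mul y x)).
Proof.
apply/inDP => G hG.
under eq_bigr do rewrite ffunE mulrBl.
rewrite sumrB !mulG; apply/eqP; rewrite subr_eq0; apply/eqP.
rewrite exchange_big; apply: eq_bigr => q _; apply: eq_bigr => r _.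
by rewrite (H_tr r q hG) [x r * _]mulrC.
Qed.

Lemma inD_mull (a y : S) : inD y -> inD (sig_mul a y).
Proof.
move=> /inDP hy; apply/inDP => G hG; rewrite mulG big1 // => q _.
under eq_bigr do rewrite -mulrA.
rewrite -mulr_sumr hy ?mulr0 // => r r' hp.
exact: H_col.
Qed.

Lemma inD0 : inD (sig0 n p).
Proof. by apply/inDP => G _; rewrite big1 // => r _; rewrite ffunE mul0r. Qed.

Lemma inD_add (x y : S) : inD x -> inD y -> inD (sig_add x y).
Proof.
move=> /inDP hx /inDP hy; apply/inDP => G hG.
under eq_bigr do rewrite ffunE mulrDl.
by rewrite big_split /= hx // hy // addr0.
Qed.

Lemma inD_opp (x : S) : inD x -> inD (sig_opp x).
Proof.
move=> /inDP hx; apply/inDP => G hG.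
under eq_bigr do rewrite ffunE mulNr.
by rewrite sumrN hx // oppr0.
Qed.

Lemma inD_sub (x y : S) : inD x -> inD y -> inD (sig_sub x y).
Proof.
move=> /inDP hx /inDP hy; apply/inDP => G hG.
under eq_bigr do rewrite ffunE mulrBl.
by rewrite sumrB hx // hy // subr0.
Qed.

End Alg.
Local Open Scope ring_scope.

Lemma one_comp n : (0 < n)%N -> [:: n] \in comps n.
Proof. by move=> hn; rewrite mem_comps /is_comp /= hn addn0 eqxx. Qed.

Section Main.
Variables n p : nat.
Hypothesis hn : (0 < n)%N.
Notation F := 'F_p.
Notation S := (Sig n p).

Let E : Comp n := SeqSub (one_comp hn).
Let e : S := @Bbar n p E.

Lemma mul_e (x : S) : sig_mul x e = x.
Proof.
apply/ffunP => s; rewrite sig_mulE.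
under eq_bigr => q _.
  rewrite (bigD1 E) //= big1 ?addr0; last first.
    by move=> r hr; rewrite /e /Bbar ffunE (negbTE hr) mulr0 mul0r.
  rewrite /e /Bbar ffunE eqxx mulr1 /cf /= coef_id (inj_eq val_inj).
  over.
rewrite (bigD1 s) //= eqxx mulr1 big1 ?addr0 // => q hq.
by rewrite eq_sym (negbTE hq) mulr0.
Qed.

Definition inL m (w : S) := forall s : Comp n, (size (val s) < m)%N -> w s = 0.

Lemma cf_diag_inv (s : Comp n) : cinv (fun r => cf p s r s).
Proof.
move=> r r' hp; rewrite /cf !coef_diag !natr_sum.
apply: (@sum_col_seq F n (val s) (val r) (val r') (fun c => (perm_eq c (val s))%:R)) => //.
by move=> c c' hc; rewrite (seq.permPl hc).
Qed.

Lemma step m (w y : S) : inL m w -> inD y -> inL m.+1 (sig_mul w y).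
Proof.
move=> hw /inDP hy s hs; rewrite sig_mulE (bigD1 s) //= [X in _ + X]big1 ?addr0.
  under eq_bigr do rewrite -mulrA.
  by rewrite -mulr_sumr hy ?mulr0 //; exact: cf_diag_inv.
move=> q hq; case: (ltnP (size (val q)) m) => hqm.
  by rewrite big1 // => r _; rewrite hw // !mul0r.
rewrite big1 // => r _.
suff -> : cf p q r s = 0 by rewrite mulr0.
rewrite /cf; case hc: (coef n (val q) (val r) (val s) == 0%N); first by rewrite (eqP hc).
have h1 := coef_size (negbT hc).
have h2 : size (val s) = size (val q).
  by apply/eqP; rewrite eqn_leq h1 andbT; apply: leq_trans hqm; rewrite -ltnS.
have hne : val s != val q by rewrite (inj_eq val_inj) eq_sym.
by rewrite (coef_eq (val r) h2 hne).
Qed.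

Fixpoint pw (z : S) k : S := if k is k'.+1 then sig_mul (pw z k') z else e.

Lemma pw_L z k : inD z -> inL k (pw z k).
Proof.
move=> hz; elim: k => [|k IH] /=; first by move=> s.
exact: step.
Qed.

Lemma pw_nil z : inD z -> pw z n.+1 = sig0 n p.
Proof.
move=> hz; apply/ffunP => s; rewrite [RHS]ffunE (pw_L (k:=n.+1) hz) //.
by rewrite ltnS comp_size.
Qed.

Lemma mul_suml_pt m (f : nat -> S) (y : S) s :
  sig_mul [ffun t => \sum_(k < m) f k t] y s = \sum_(k < m) sig_mul (f k) y s.
Proof.
rewrite sig_mulE.
under eq_bigr do (under eq_bigr do rewrite ffunE !mulr_suml; rewrite exchange_big /=).
rewrite exchange_big; apply: eq_bigr => k _; rewrite sig_mulE.
by [].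
Qed.

Lemma mul_subr_pt (w u a b : S) s : (forall r, u r = a r - b r) ->
  sig_mul w u s = sig_mul w a s - sig_mul w b s.
Proof.
move=> hu; rewrite !sig_mulE -sumrB; apply: eq_bigr => q _.
rewrite -sumrB; apply: eq_bigr => r _.
by rewrite hu mulrBr mulrBl.
Qed.

Lemma geom (y i : S) : inD y -> (forall r, i r = e r - y r) ->
  sig_mul [ffun t => \sum_(k < n.+1) pw y k t] i = e.
Proof.
move=> hy hi; apply/ffunP => s; rewrite mul_suml_pt.
under eq_bigr do rewrite (mul_subr_pt _ _ hi) mul_e.
rewrite sumrB big_ord_recl [X in _ - X]big_ord_recr /=.
have -> : sig_mul (pw y n) y = pw y n.+1 by [].
rewrite pw_nil // (_ : sig0 n p s = 0) ?ffunE // addr0.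
under eq_bigr do rewrite add0n.
by rewrite addrK.
Qed.

Theorem comm_in_radical (x y : S) : in_radical (sig_sub (sig_mul x y) (sig_mul y x)).
Proof.
move=> I [[I0 Iadd Iopp Imul] Ineq Imax].
set c := sig_sub (sig_mul x y) (sig_mul y x).
have hc : inD c by exact: inD_comm.
pose J := [set v : S | [exists i in I, inD (sig_sub v i)]].
have subsub (v w : S) : sig_sub v w = sig_sub v w by [].
have hJ : left_ideal J.
  split.
  - rewrite inE; apply/existsP; exists (sig0 n p); rewrite I0 /=.
    have -> : sig_sub (sig0 n p) (sig0 n p) = sig0 n p.
      by apply/ffunP => s; rewrite !ffunE subrr.
    exact: inD0.
  - move=> v w; rewrite !inE => /exists_inP [i hi hv] /exists_inP [j hj hw].
    apply/exists_inP; exists (sig_add i j); first exact: Iadd.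
    have -> : sig_sub (sig_add v w) (sig_add i j) = sig_add (sig_sub v i) (sig_sub w j).
      by apply/ffunP => s; rewrite !ffunE opprD addrACA.
    exact: inD_add.
  - move=> v; rewrite !inE => /exists_inP [i hi hv].
    apply/exists_inP; exists (sig_opp i); first exact: Iopp.
    have -> : sig_sub (sig_opp v) (sig_opp i) = sig_opp (sig_sub v i).
      by apply/ffunP => s; rewrite !ffunE opprB opprK addrC.
    exact: inD_opp.
  - move=> a v; rewrite !inE => /exists_inP [i hi hv].
    apply/exists_inP; exists (sig_mul a i); first exact: Imul.
    have -> : sig_sub (sig_mul a v) (sig_mul a i) = sig_mul a (sig_sub v i).
      by apply/ffunP => s; rewrite ffunE (mul_subr_pt _ _ (fun r => ffunE _ _)).
    exact: inD_mull.
have hIJ : I \subset J.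
  apply/subsetP => i hi; rewrite inE; apply/exists_inP; exists i => //.
  have -> : sig_sub i i = sig0 n p by apply/ffunP => s; rewrite !ffunE subrr.
  exact: inD0.
case: (Imax J hJ hIJ) => hJI.
  have : c \in J.
    rewrite inE; apply/exists_inP; exists (sig0 n p) => //.
    have -> : sig_sub c (sig0 n p) = c by apply/ffunP => s; rewrite !ffunE subr0.
    exact: hc.
  by rewrite hJI.
exfalso; move/negP: Ineq; apply; apply/eqP.
have : e \in J by rewrite hJI inE.
rewrite inE => /exists_inP [i hi hv].
have hi' : forall r, i r = e r - sig_sub e i r.
  by move=> r; rewrite [sig_sub _ _ _]ffunE opprB addrC subrK.
have he : e \in I.
  by rewrite -(geom hv hi'); apply: Imul.
apply/setP => b; rewrite inE; rewrite -(mul_e b); exact: Imul.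
Qed.

End Main.

Local Close Scope ring_scope.

Theorem theorem2p3 (n p : nat) (hn : (0 < n)%N) (hp : prime p) :
  forall x y : Sig n p, in_radical (sig_sub (sig_mul x y) (sig_mul y x)).
Proof.
move=> x y; exact: comm_in_radical.
Qed.
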